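(* Let $u_1,\dots,u_n$ be Boolean variables and $C_1,\dots,C_m$ clauses, each consisting of exactly 3 literals over these variables. Let $G$ be the graph with vertex set $\{x_i,u_i,v_i,\bar u_i,y_i:1\le i\le n\}\cup\{c_j:1\le j\le m\}\cup\{s_1,s_2,s_3,s_4,t\}$ and the following edges: for each $i$, $x_iu_i$, $u_iv_i$, $v_i\bar u_i$, $\bar u_iy_i$; for each $j$, an edge from $c_j$ to $u_i$ (resp. $\bar u_i$) whenever the literal $u_i$ (resp. $\bar u_i$) appears in $C_j$; for each $j$ and each $s\in\{s_1,s_3,s_4\}$, the edge $sc_j$; the edges $s_1s_2,s_3s_2,s_4s_2$; the edges $ts_1,ts_3,ts_4$; and the edges $tu_i$, $t\bar u_i$ for all $i$. Then $\tilde\gamma_c(G)\ge 3n+1$, and the collection $\{C_1,\dots,C_m\}$ is satisfiable if and only if $\tilde\gamma_c(G)=3n+1$.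
   Context: All graphs are finite and simple. A set $S\subseteq V$ is a dominating set of $G=(V,E)$ if every vertex not in $S$ is adjacent to a vertex of $S$. A set $\tilde D\subseteq V$ is an outer-connected dominating set of $G$ if $\tilde D$ is dominating and the induced subgraph $G[V\setminus\tilde D]$ is connected (the empty graph counts as connected). $\tilde\gamma_c(G)$ denotes the minimum size of an outer-connected dominating set of $G$. A collection of clauses is satisfiable if some truth assignment to the variables makes every clause contain a true literal. *)

(* Defs.v *)
From mathcomp Require Import all_boot.
Set Implicit Arguments. Unset Strict Implicit. Unset Printing Implicit Defensive.

(* A literal over variables u_0..u_{n-1}: (i, true) is u_i, (i, false) is \bar u_i. *)
Definition literal (n : nat) := ('I_n * bool)%type.

Definition lit_true n (a : 'I_n -> bool) (l : literal n) : bool := a l.1 == l.2.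

Definition satisfiable n m (cl : 'I_m -> 3.-tuple (literal n)) : Prop :=
  exists a : 'I_n -> bool, forall j : 'I_m, has (lit_true a) (cl j).

Definition dominating (T : finType) (e : rel T) (S : {set T}) : bool :=
  [forall v, (v \notin S) ==> [exists u in S, e v u]].

Definition induced_rel (T : finType) (e : rel T) (A : {set T}) : rel T :=
  [rel a b | [&& a \in A, b \in A & e a b]].

Definition outer_connected (T : finType) (e : rel T) (S : {set T}) : bool :=
  [forall x in ~: S, forall y in ~: S, connect (induced_rel e (~: S)) x y].

Definition outer_conn_dom (T : finType) (e : rel T) (S : {set T}) : bool :=
  dominating e S && outer_connected e S.

(* minimum size of an outer-connected dominating set (the full vertex set is one) *)
Definition gamma_oc (T : finType) (e : rel T) : nat :=
  \big[minn/#|T|]_(S : {set T} | outer_conn_dom e S) #|S|.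

(* Vertices of the reduction graph:
   inl (inl (i,k)) : k = 0,1,2,3,4 stands for x_i, u_i, v_i, \bar u_i, y_i;
   inl (inr j)     : c_j;
   inr s           : s = 0,1,2,3,4 stands for s_1, s_2, s_3, s_4, t. *)
Definition gvert (n m : nat) := ((('I_n * 'I_5) + 'I_m) + 'I_5)%type.

Definition in134 (s : 'I_5) : bool := (val s == 0) || (val s == 2) || (val s == 3).

(* one orientation of each edge *)
Definition gadj0 n m (cl : 'I_m -> 3.-tuple (literal n)) (a b : gvert n m) : bool :=
  match a, b with
  | inl (inl (i, k)), inl (inl (i', k')) => (i == i') && (val k' == (val k).+1)
  | inl (inr j), inl (inl (i, k)) =>
      ((val k == 1) && ((i, true) \in (cl j : seq _))) ||
      ((val k == 3) && ((i, false) \in (cl j : seq _)))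
  | inl (inr j), inr s => in134 s
  | inr s, inr s' => ((val s == 1) || (val s == 4)) && in134 s'
  | inr s, inl (inl (i, k)) => (val s == 4) && ((val k == 1) || (val k == 3))
  | _, _ => false
  end.

Definition gadj n m (cl : 'I_m -> 3.-tuple (literal n)) : rel (gvert n m) :=
  fun a b => gadj0 cl a b || gadj0 cl b a.

(* Main.v *)
Require Import Defs.
From mathcomp Require Import all_boot.
From mathcomp Require Import zify.
Set Implicit Arguments. Unset Strict Implicit. Unset Printing Implicit Defensive.

Definition mid (k : 'I_3) : 'I_5 := @Ordinal 5 k.+1 (leq_trans (ltn_ord k) (isT : 3 <= 4)).
Definition O0 : 'I_5 := @Ordinal 5 0 isT.
Definition O4 : 'I_5 := @Ordinal 5 4 isT.

Definition fimg n m (g : 'I_n -> 'I_3) (h : 'I_4) (x : ('I_n * 'I_3) + unit) : gvert n m :=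
  match x with
  | inl (i, k) => inl (inl (i, match val k with 0 => O0 | 1 => O4 | _ => mid (g i) end))
  | inr _ => inr (widen_ord (isT : 4 <= 5) h)
  end.

Lemma card_T n m : #|{: gvert n m}| = n * 5 + m + 5.
Proof. by rewrite !card_sum card_prod !card_ord. Qed.

Lemma card_dom n : #|{: ('I_n * 'I_3) + unit}| = n * 3 + 1.
Proof. by rewrite card_sum card_prod !card_ord card_unit. Qed.

Lemma fimg_inj n m g h : injective (@fimg n m g h).
Proof.
move=> [[i k]|[]] [[i' k']|[]] //=.
move=> [<-] /(congr1 val).
have := ltn_ord (g i).
case: k => [[|[|[|k]]] Hk] //; case: k' => [[|[|[|k']]] Hk'] //= Hg E;
  try (by congr (inl (_, _)); apply: val_inj); lia.
Qed.

Lemma memF n m (g : 'I_n -> 'I_3) (h : 'I_4) (w : gvert n m) :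
  (w \in [set @fimg n m g h x | x in setT]) =
  match w with
  | inl (inl (i, k)) => [|| val k == 0, val k == 4 | val k == (g i).+1]
  | inl (inr _) => false
  | inr s => val s == val h
  end.
Proof.
apply/imsetP/idP.
  move=> [[[i k]|[]] _ ->] //=.
  by case: k => [[|[|[|k]]] Hk] //=; rewrite eqxx ?orbT.
case: w => [[[i k]|j]|s] //.
  case/or3P => /eqP Hk.
  - exists (inl (i, @Ordinal 3 0 isT)) => //=; congr (inl (inl (_, _))); exact: val_inj.
  - exists (inl (i, @Ordinal 3 1 isT)) => //=; congr (inl (inl (_, _))); exact: val_inj.
  - exists (inl (i, @Ordinal 3 2 isT)) => //=; congr (inl (inl (_, _))); exact: val_inj.
move=> /eqP Hs; exists (inr tt) => //=; congr inr; exact: val_inj.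
Qed.


Definition O1 : 'I_5 := @Ordinal 5 1 isT.
Definition O2 : 'I_5 := @Ordinal 5 2 isT.
Definition O3 : 'I_5 := @Ordinal 5 3 isT.

Ltac fin1 := first [ congr (inl (inl (_, _))); apply: val_inj; done
                   | congr inr; apply: val_inj; done ].
Ltac finor := first [ fin1 | (left; fin1) | (right; finor) ].
Ltac nbt u i' k j s := case: u => [[[i' k]|j]|s]; rewrite /gadj /gadj0 /=;
  try (case: s => [[|[|[|[|[|?]]]]] ?] //=);
  try (case: k => [[|[|[|[|[|?]]]]] ?] //=);
  rewrite ?andbF ?andbT ?orbF //; try by case.
Ltac nbf := try (move=> /eqP E; subst); try move=> _; finor.

Lemma nbr_x n m cl (i : 'I_n) (u : gvert n m) :
  gadj cl (inl (inl (i, O0))) u -> u = inl (inl (i, O1)).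
Proof. nbt u i' k j s; nbf. Qed.

Lemma nbr_y n m cl (i : 'I_n) (u : gvert n m) :
  gadj cl (inl (inl (i, O4))) u -> u = inl (inl (i, O3)).
Proof. nbt u i' k j s; nbf. Qed.

Lemma nbr_v n m cl (i : 'I_n) (u : gvert n m) :
  gadj cl (inl (inl (i, O2))) u -> u = inl (inl (i, O1)) \/ u = inl (inl (i, O3)).
Proof. nbt u i' k j s; nbf. Qed.

Lemma nbr_s2 n m cl (u : gvert n m) :
  gadj cl (inr O1) u -> u = inr O0 \/ u = inr O2 \/ u = inr O3.
Proof. nbt u i' k j s; nbf. Qed.


Lemma lower n m cl (S : {set gvert n m}) : outer_conn_dom (gadj cl) S ->
  #|{: gvert n m}| <= #|S|.+1 \/
  exists g h, [set @fimg n m g h x | x in setT] \subset S.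
Proof.
case/andP => Hdom Hoc.
case: (leqP #|~: S| 1) => Hc.
  by left; have := cardsC S; rewrite -cardsT; have := cardsT (gvert n m); lia.
right.
have Hdom' : forall w, w \notin S -> exists2 u, u \in S & gadj cl w u.
  move=> w Hw; move/forallP/(_ w)/implyP/(_ Hw)/existsP: Hdom => [u /andP[]]; eauto.
have Hnb : forall w, w \notin S -> exists2 u, u \notin S & gadj cl w u.
  move=> w Hw; case/card_gt1P: Hc => x [y [Hx Hy Hxy]].
  have [z Hz Hzw] : exists2 z, z \in ~: S & z != w.
    case: (eqVneq x w) => [Exw|]; last by exists x.
    by exists y => //; rewrite -Exw eq_sym.
  move/forallP/(_ w)/implyP: Hoc; rewrite inE Hw => /(_ isT)/forallP/(_ z)/implyP/(_ Hz)/connectP [p].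
  case: p => [_ /= Ezw|u p /= /andP[Hu _] _]; first by rewrite Ezw eqxx in Hzw.
  rewrite /induced_rel /= !inE in Hu; case/and3P: Hu => _ Hu He; by exists u.
have Hx i : inl (inl (i, O0)) \in S.
  apply/negPn/negP => H; case: (Hdom' _ H) => u Hu /nbr_x Eu.
  case: (Hnb _ H) => u' Hu' /nbr_x Eu'; by rewrite Eu' -Eu Hu in Hu'.
have Hy i : inl (inl (i, O4)) \in S.
  apply/negPn/negP => H; case: (Hdom' _ H) => u Hu /nbr_y Eu.
  case: (Hnb _ H) => u' Hu' /nbr_y Eu'; by rewrite Eu' -Eu Hu in Hu'.
have Hv i : exists k : 'I_3, inl (inl (i, mid k)) \in S.
  case: (boolP (inl (inl (i, O2)) \in S)) => H.
    exists (@Ordinal 3 1 isT); rewrite (_ : mid _ = O2) //; exact: val_inj.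
  case: (Hdom' _ H) => u Hu /nbr_v [] Eu.
    exists (@Ordinal 3 0 isT); rewrite (_ : mid _ = O1) -?Eu //; exact: val_inj.
  exists (@Ordinal 3 2 isT); rewrite (_ : mid _ = O3) -?Eu //; exact: val_inj.
have Hs : exists h : 'I_4, (inr (widen_ord (isT : 4 <= 5) h) : gvert n m) \in S.
  case: (boolP ((inr O1 : gvert n m) \in S)) => H.
    exists (@Ordinal 4 1 isT); rewrite (_ : widen_ord _ _ = O1) //; exact: val_inj.
  case: (Hdom' _ H) => u Hu /nbr_s2 [|[]] Eu.
  - exists (@Ordinal 4 0 isT); rewrite (_ : widen_ord _ _ = O0) -?Eu //; exact: val_inj.
  - exists (@Ordinal 4 2 isT); rewrite (_ : widen_ord _ _ = O2) -?Eu //; exact: val_inj.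
  - exists (@Ordinal 4 3 isT); rewrite (_ : widen_ord _ _ = O3) -?Eu //; exact: val_inj.
have [g Hg] := fin_all_exists Hv.
case: Hs => h Hh; exists g, h.
apply/subsetP => _ /imsetP [[[i [[|[|[|k]]] Hk]]|[]] _ ->] //=.
Qed.


Lemma card_img n m g h : #|[set @fimg n m g h x | x in setT]| = n * 3 + 1.
Proof. by rewrite card_imset ?cardsT ?card_dom //; apply: fimg_inj. Qed.

Lemma ge_S n m cl (S : {set gvert n m}) : outer_conn_dom (gadj cl) S -> 3 * n + 1 <= #|S|.
Proof.
case/lower => [|[g [h Hsub]]].
  rewrite card_T; lia.
by have := subset_leq_card Hsub; rewrite card_img mulnC.
Qed.

Lemma eq_sat n m cl (S : {set gvert n m}) : outer_conn_dom (gadj cl) S ->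
  #|S| = 3 * n + 1 -> satisfiable cl.
Proof.
move=> Hocd HS; case/lower: (Hocd) => [|[g [h Hsub]]].
  rewrite card_T; lia.
set F := [set _ | _ in _] in Hsub.
have EF : F = S.
  apply/eqP; rewrite eqEcard Hsub HS card_img; lia.
case/andP: Hocd => Hdom _; rewrite -EF in Hdom.
have Hd : forall w, w \notin F -> exists2 u, u \in F & gadj cl w u.
  move=> w Hw; move/forallP/(_ w)/implyP/(_ Hw)/existsP: Hdom => [u /andP[]]; eauto.
have Hh : val h = 1.
  apply/eqP/negPn/negP => Hh.
  set s' : 'I_5 := if val h == 0 then O2 else O0.
  have : (inr s' : gvert n m) \notin F.
    by rewrite memF /s'; case: (val h =P 0) => [->|/eqP] //=; rewrite eq_sym.
  case/Hd => u; case: u => [[[i k]|j]|s]; rewrite memF //=.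
    by move=> _; rewrite /gadj /gadj0 /= /s'; case: ifP.
  move=> /eqP Es; rewrite /gadj /gadj0 /= Es (negbTE Hh) (ltn_eqF (ltn_ord h)) /=.
  by rewrite orbF /s'; case: ifP.
exists (fun i => val (g i) == 0) => j.
have : (inl (inr j) : gvert n m) \notin F by rewrite memF.
case/Hd => u; case: u => [[[i k]|j']|s]; rewrite memF //=.
  case: k => [[|[|[|[|[|?]]]]] ?] //=; rewrite /gadj /gadj0 /= ?orbF ?andbF //=.
  - move=> /eqP Eg Hin; apply/hasP; exists (i, true) => //.
    by rewrite /lit_true /=; case: (g i) Eg => [[|?] ?].
  - move=> /eqP Eg Hin; apply/hasP; exists (i, false) => //.
    by rewrite /lit_true /=; case: (g i) Eg => [[|?] ?].
case: s => [[|[|[|[|[|?]]]]] ?] /=; rewrite Hh //=.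
all: by [] || (move=> _; rewrite /gadj /gadj0 /=; case).
Qed.


Definition g0 n (a : 'I_n -> bool) (i : 'I_n) : 'I_3 :=
  if a i then @Ordinal 3 0 isT else @Ordinal 3 2 isT.
Definition h1 : 'I_4 := @Ordinal 4 1 isT.

Lemma sat_dom n m (cl : 'I_m -> 3.-tuple (literal n)) (Hn : 0 < n) (a : 'I_n -> bool)
  (Ha : forall j, has (lit_true a) (cl j)) :
  dominating (gadj cl) [set @fimg n m (g0 a) h1 x | x in setT].
Proof.
apply/forallP => w; apply/implyP; rewrite memF => Hw; apply/existsP.
case: w Hw => [[[i k]|j]|s].
- case Ea: (a i); case: k => [[|[|[|[|[|?]]]]] ?]; rewrite /g0 Ea //=.
  all: try (by move=> -[]).
  + by move=> _; exists (inl (inl (i, O1))); rewrite memF /gadj /gadj0 /= /g0 Ea eqxx.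
  + by move=> _; exists (inl (inl (i, O4))); rewrite memF /gadj /gadj0 /= eqxx.
  + by move=> _; exists (inl (inl (i, O0))); rewrite memF /gadj /gadj0 /= eqxx.
  + by move=> _; exists (inl (inl (i, O3))); rewrite memF /gadj /gadj0 /= /g0 Ea eqxx.
- move=> _; case/hasP: (Ha j) => [[i b] Hl /= /eqP Hab].
  exists (inl (inl (i, if b then O1 else O3))).
  by case: b Hl Hab => Hl Hab; rewrite memF /gadj /gadj0 /= /g0 Hab Hl.
- case: s => [[|[|[|[|[|?]]]]] ?] //= _.
  + by exists (inr O1); rewrite memF /gadj /gadj0.
  + by exists (inr O1); rewrite memF /gadj /gadj0.
  + by exists (inr O1); rewrite memF /gadj /gadj0.
  + set i0 : 'I_n := Ordinal Hn.
    exists (inl (inl (i0, if a i0 then O1 else O3))).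
    by case Ea: (a i0); rewrite memF /gadj /gadj0 /= /g0 Ea.
Qed.

Lemma sat_oc n m (cl : 'I_m -> 3.-tuple (literal n)) (a : 'I_n -> bool) :
  outer_connected (gadj cl) [set @fimg n m (g0 a) h1 x | x in setT].
Proof.
set F := [set _ | _ in _].
set r := induced_rel (gadj cl) (~: F).
have Hsym : symmetric r.
  move=> x y; rewrite /r /induced_rel /= /gadj [gadj0 _ y x || _]orbC.
  by case: (x \in _); case: (y \in _).
have Ht : forall w, w \in ~: F -> connect r w (inr O4).
  move=> w; rewrite inE memF.
  case: w => [[[i k]|j]|s].
  - case Ea: (a i); case: k => [[|[|[|[|[|?]]]]] ?]; rewrite /g0 Ea //= => _.
    + apply: (connect_trans (y := inl (inl (i, O3)))); apply: connect1;
        by rewrite /r /induced_rel /= !inE !memF /gadj /gadj0 /=; rewrite /g0 Ea /= ?eqxx.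
    + apply: connect1; by rewrite /r /induced_rel /= !inE !memF /gadj /gadj0 /=; rewrite /g0 Ea /= ?eqxx.
    + apply: connect1; by rewrite /r /induced_rel /= !inE !memF /gadj /gadj0 /=; rewrite /g0 Ea /= ?eqxx.
    + apply: (connect_trans (y := inl (inl (i, O1)))); apply: connect1;
        by rewrite /r /induced_rel /= !inE !memF /gadj /gadj0 /=; rewrite /g0 Ea /= ?eqxx.
  - move=> _; apply: (connect_trans (y := inr O0)); apply: connect1;
      by rewrite /r /induced_rel /= !inE !memF /gadj /gadj0 /=.
  - case: s => [[|[|[|[|[|?]]]]] ?] //= _.
    + apply: connect1; by rewrite /r /induced_rel /= !inE !memF /gadj /gadj0 /=.
    + apply: connect1; by rewrite /r /induced_rel /= !inE !memF /gadj /gadj0 /=.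
    + apply: connect1; by rewrite /r /induced_rel /= !inE !memF /gadj /gadj0 /=.
    + rewrite (_ : Ordinal _ = O4) //; exact: val_inj.
apply/forallP => x; apply/implyP => Hx; apply/forallP => y; apply/implyP => Hy.
apply: connect_trans (Ht _ Hx) _; rewrite (sym_connect_sym Hsym); exact: Ht.
Qed.

Lemma big_minn_le (I : finType) (P : pred I) (F : I -> nat) d j :
  P j -> \big[minn/d]_(i | P i) F i <= F j.
Proof.
move=> Pj; have : j \in index_enum I by rewrite mem_index_enum.
elim: (index_enum I) => //= i r IH; rewrite inE big_cons => /orP[/eqP Eji|Hj].
  by subst; rewrite Pj geq_minl.
case: (P i); last exact: IH.
exact: leq_trans (geq_minr _ _) (IH Hj).
Qed.

Theorem claim5p3 (n m : nat) (cl : 'I_m -> 3.-tuple (literal n))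
  (Hn : 0 < n) (Hcl : forall j : 'I_m, uniq (cl j)) :
  3 * n + 1 <= gamma_oc (gadj cl) /\
  (satisfiable cl <-> gamma_oc (gadj cl) = 3 * n + 1).
Proof.
have Hge : 3 * n + 1 <= gamma_oc (gadj cl).
  rewrite /gamma_oc; elim/big_ind: _ => //.
  - rewrite card_T; lia.
  - by move=> x y Hx Hy; rewrite leq_min Hx Hy.
  - by move=> S; apply: ge_S.
split => //; split.
- move=> [a Ha]; apply/eqP; rewrite eqn_leq Hge andbT.
  set F := [set @fimg n m (g0 a) h1 x | x in setT].
  have HF : outer_conn_dom (gadj cl) F by rewrite /outer_conn_dom sat_dom ?sat_oc.
  apply: leq_trans (big_minn_le _ _ HF) _.
  by rewrite card_img mulnC.
- move=> Hg; rewrite /gamma_oc in Hg.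
  have [S HS ES] : exists2 S : {set gvert n m}, outer_conn_dom (gadj cl) S & #|S| = 3 * n + 1.
    move: Hg; elim/big_rec: _ => [|S x HS IH].
      rewrite card_T; lia.
    rewrite /minn; case: ltnP => _; [by move=> <-; exists S | exact: IH].
  exact: eq_sat HS ES.
Qed.
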